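(* Let $(\mathsf{X},\mathscr{X})$ be a measurable space and $P$ a Markov kernel on $\mathsf{X}\times\mathscr{X}$. For any probability measures $\xi$ and $\xi'$ on $(\mathsf{X},\mathscr{X})$, any integer $n\geqslant 1$, any $c=(c_0,\ldots,c_{n-1})\in \mathbb{R}_+^n$ and any measurable $h:\mathsf{X}^n\to\mathbb{R}$ satisfying $|h(x)-h(y)|\leqslant \sum_{i=0}^{n-1}c_i\mathbf{1}_{\{x_i\neq y_i\}}$ for all $x=(x_0,\ldots,x_{n-1}),y=(y_0,\ldots,y_{n-1})\in\mathsf{X}^n$, we have \[ \big|\mathbb{E}_\xi[h(X_0,\ldots,X_{n-1})]-\mathbb{E}_{\xi'}[h(X_0,\ldots,X_{n-1})]\big|\leqslant 2\sum_{i=0}^{n-1}c_i\, \mathrm{d}_{\mathrm{TV}}(\xi P^i,\xi'P^i)\;. \]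
   Context: For a probability measure $\xi$ on $(\mathsf{X},\mathscr{X})$, $\mathbb{P}_\xi$ denotes the law of the Markov chain $(X_k)_{k\geqslant 0}$ (canonical process on $\mathsf{X}^{\mathbb{Z}_+}$) with Markov kernel $P$ and initial distribution $\xi$, and $\mathbb{E}_\xi$ its expectation. $\xi P^i$ is the law of $X_i$ under $\mathbb{P}_\xi$. $\mathrm{d}_{\mathrm{TV}}(\mu,\nu)=\sup_{A\in\mathscr{X}}|\mu(A)-\nu(A)|$ denotes the total variation distance between probability measures. *)

(* Defs.v *)
From HB Require Import structures.
From mathcomp Require Import all_boot all_order all_algebra.
From mathcomp Require Import all_classical all_reals all_analysis.
Set Implicit Arguments. Unset Strict Implicit. Unset Printing Implicit Defensive.
Import Order.TTheory GRing.Theory Num.Theory.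
Local Open Scope classical_set_scope.
Local Open Scope ring_scope.
Local Open Scope ereal_scope.

Section markov_chain.
Context (d : measure_display) (X : measurableType d) (R : realType).
Variable P : R.-pker X ~> X.

(* [cont k f s x]: given the already visited states [s] and the current
   state [x], integrate [f] (a function of the whole path) against the
   next [k] transitions of the chain with kernel [P]. *)
Fixpoint cont (k : nat) (f : seq X -> \bar R) (s : seq X) (x : X) : \bar R :=
  match k with
  | 0 => f (rcons s x)
  | k'.+1 => \int[P x]_y cont k' f (rcons s x) y
  end.

(* E_xi[ f (X_0, ..., X_k) ] for the canonical Markov chain with kernel P
   and initial distribution xi (finite-dimensional marginal of P_xi). *)
Definition chainE (xi : probability X R) (k : nat) (f : seq X -> \bar R)
  : \bar R := \int[xi]_x cont k f [::] x.

(* xi P^i : the law of X_i under P_xi, as a set function. *)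
Definition lawX (xi : probability X R) (i : nat) (A : set X) : \bar R :=
  chainE xi i (fun s => (\1_A (last point s))%:E).

(* E_xi[ h (X_0, ..., X_{n-1}) ] for h : X^n -> R (n >= 1). *)
Definition chainE_tuple (xi : probability X R) (n : nat)
  (h : n.-tuple X -> R) : \bar R :=
  chainE xi n.-1 (fun s => (h (insubd [tuple of nseq n point] s))%:E).

End markov_chain.

Definition dTV (d : measure_display) (X : measurableType d) (R : realType)
  (mu nu : set X -> \bar R) : \bar R :=
  ereal_sup [set `| mu A - nu A | | A in @measurable d X].

(* Main.v *)
Require Import Defs.
From HB Require Import structures.
From mathcomp Require Import all_boot all_order all_algebra.
From mathcomp Require Import all_classical all_reals all_analysis.
From mathcomp Require Import ring lra zify measurable_realfun.
Import Order.TTheory GRing.Theory Num.Theory.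
Local Open Scope classical_set_scope.
Local Open Scope ring_scope.
Set Implicit Arguments. Unset Strict Implicit. Unset Printing Implicit Defensive.

Section integ.
Context (d : measure_display) (T : measurableType d) (R : realType).
Variable mu : {measure set T -> \bar R}.
Hypothesis mu1 : mu [set: T] = 1%E.

Definition bdd (f : T -> R) := exists B, forall x, `|f x| <= B.

Lemma bdd_cst c : bdd (fun _ => c).
Proof. by exists `|c|. Qed.

Lemma int_bd f : measurable_fun [set: T] f -> bdd f ->
  mu.-integrable [set: T] (EFin \o f).
Proof.
move=> mf [B hB]; apply: measurable_bounded_integrable => //.
  by rewrite mu1 ltry.
exists B; split; first by rewrite num_real.
by move=> x Bx y _; apply: le_trans (hB y) (ltW Bx).
Qed.

Lemma RintE f : measurable_fun [set: T] f -> bdd f ->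
  (Rintegral mu [set: T] f)%:E = (\int[mu]_x (f x)%:E)%E.
Proof.
move=> mf bf; rewrite /Rintegral fineK //.
by have := integrable_fin_num measurableT (int_bd mf bf).
Qed.

Lemma Rint_cst c : Rintegral mu [set: T] (fun _ => c) = c.
Proof. by rewrite Rintegral_cst // mu1 /= mulr1. Qed.

Lemma Rint_lin a f g : measurable_fun [set: T] f -> bdd f ->
  measurable_fun [set: T] g -> bdd g ->
  Rintegral mu [set: T] (fun x => a * f x + g x) =
  a * Rintegral mu [set: T] f + Rintegral mu [set: T] g.
Proof.
move=> mf bf mg bg.
have maf : measurable_fun [set: T] (fun x => a * f x).
  by apply: measurable_funM => //; exact: measurable_cst.
have baf : bdd (fun x => a * f x).
  by case: bf => B hB; exists (`|a| * B) => x; rewrite normrM ler_wpM2l.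
rewrite RintegralD //; try exact: int_bd.
rewrite RintegralZl //; try exact: int_bd.
Qed.

Lemma Rint_le f g : measurable_fun [set: T] f -> bdd f ->
  measurable_fun [set: T] g -> bdd g -> (forall x, f x <= g x) ->
  Rintegral mu [set: T] f <= Rintegral mu [set: T] g.
Proof.
move=> mf bf mg bg fg; apply: le_Rintegral => //; try exact: int_bd.
Qed.

End integ.
Section chain.
Context (d : measure_display) (X : measurableType d) (R : realType).
Variable P : R.-pker X ~> X.
Local Notation z := (point : X).

Definition goodm (f : seq X -> R) :=
  forall m, measurable_fun [set: m.-tuple X] (fun t : m.-tuple X => f (tval t)).
Definition goodb (f : seq X -> R) := exists B, forall p, `|f p| <= B.
Definition good f := goodm f /\ goodb f.

Lemma meas_nth m j :
  measurable_fun [set: m.-tuple X] (fun t : m.-tuple X => nth z (tval t) j).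
Proof.
case: (ltnP j m) => hj.
  rewrite (_ : (fun t : m.-tuple X => _) = (fun t => tnth t (Ordinal hj))).
    exact: measurable_tnth.
  by apply/funext => t; rewrite (tnth_nth z).
rewrite (_ : (fun t : m.-tuple X => _) = cst z); first exact: measurable_cst.
by apply/funext => t; rewrite nth_default // size_tuple.
Qed.

Lemma meas_last m :
  measurable_fun [set: m.-tuple X] (fun t : m.-tuple X => last z (tval t)).
Proof.
rewrite (_ : (fun t : m.-tuple X => _) = (fun t => nth z (tval t) m.-1)).
  exact: meas_nth.
by apply/funext => t; rewrite -nth_last size_tuple.
Qed.

Lemma meas_to_tuple d1 (T1 : measurableType d1) n (F : T1 -> n.-tuple X) :
  (forall j, (j < n)%N -> measurable_fun [set: T1] (fun x => nth z (tval (F x)) j)) ->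
  measurable_fun [set: T1] F.
Proof.
move=> hF; apply/measurable_fun_tnthP => i.
rewrite (_ : _ \o F = (fun x => nth z (tval (F x)) i)); first exact: hF.
by apply/funext => x /=; rewrite (tnth_nth z).
Qed.

Definition Pt m (t : m.-tuple X) : {measure set X -> \bar R} := P (last z (tval t)).

Lemma Pt_meas m U : measurable U -> measurable_fun [set: m.-tuple X] ((@Pt m) ^~ U).
Proof.
move=> mU; have := measurableT_comp (measurable_kernel P U mU) (@meas_last m).
by [].
Qed.

HB.instance Definition _ m := isKernel.Build _ _ _ _ R (@Pt m) (@Pt_meas m).

Lemma Pt_uub m : measure_fam_uub (@Pt m).
Proof. by exists 2 => t; rewrite /Pt prob_kernel lte_fin ltr1n. Qed.

HB.instance Definition _ m := Kernel_isFinite.Build _ _ _ _ R (@Pt m) (@Pt_uub m).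

Definition TR (f : seq X -> R) (p : seq X) : R :=
  Rintegral (P (last z p)) [set: X] (fun y => f (rcons p y)).

Lemma meas_rcons m :
  measurable_fun [set: m.-tuple X * X]
    (fun ty : m.-tuple X * X => [tuple of rcons (tval ty.1) ty.2]).
Proof.
apply: meas_to_tuple => j hj /=.
case: (ltnP j m) => hjm.
  rewrite (_ : (fun x => _) = (fun ty : m.-tuple X * X => nth z (tval ty.1) j)).
    exact: (measurableT_comp (@meas_nth m j) measurable_fst).
  by apply/funext => ty; rewrite nth_rcons size_tuple hjm.
have -> : j = m by apply/eqP; rewrite eqn_leq -ltnS hj hjm.
rewrite (_ : (fun x => _) = (fun ty : m.-tuple X * X => ty.2)).
  exact: measurable_snd.
by apply/funext => ty; rewrite nth_rcons size_tuple ltnn eqxx.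
Qed.

Lemma meas_frcons f m : goodm f ->
  measurable_fun [set: m.-tuple X * X]
    (fun ty : m.-tuple X * X => f (rcons (tval ty.1) ty.2)).
Proof.
move=> mf; exact: (measurableT_comp (mf m.+1) (@meas_rcons m)).
Qed.

Lemma meas_frcons2 f m (t : m.-tuple X) : goodm f ->
  measurable_fun [set: X] (fun y => f (rcons (tval t) y)).
Proof.
move=> mf; exact: (measurable_fun_pair2 t (@meas_frcons f m mf)).
Qed.

Lemma meas_frcons_p f p : goodm f ->
  measurable_fun [set: X] (fun y => f (rcons p y)).
Proof.
move=> mf; have := @meas_frcons2 f (size p) (in_tuple p) mf; by [].
Qed.

Lemma bdd_frcons f p : goodb f -> bdd (fun y => f (rcons p y)).
Proof. by case=> B hB; exists B => y. Qed.

Lemma goodm_TR f : good f -> goodm (TR f).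
Proof.
move=> [mf [B hB]] m.
have B0 : 0 <= B by apply: le_trans (hB [::]).
rewrite (_ : (fun t : m.-tuple X => _) = (fun t : m.-tuple X =>
   fine (\int[Pt t]_y ((fun ty : m.-tuple X * X => (f (rcons (tval ty.1) ty.2) + B)%:E) (t, y)))%E - B)).
  apply: measurable_funB; last exact: measurable_cst.
  pose k := (fun ty : m.-tuple X * X => (f (rcons (tval ty.1) ty.2) + B)%:E).
  have hk : measurable_fun [set: m.-tuple X] (fun t => (\int[Pt t]_y k (t, y))%E).
    apply: (measurable_fun_integral_finite_kernel _ (@Pt m)).
      move=> [t y] /=; rewrite /k lee_fin -lerBlDr sub0r.
      by have := hB (rcons (tval t) y); rewrite ler_norml => /andP[].
    apply/measurable_EFinP; apply: measurable_funD; last exact: measurable_cst.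
    exact: meas_frcons.
  exact: (measurableT_comp (fine_measurable measurableT) hk).
apply/funext => t; rewrite /TR.
have := @Rint_lin _ _ _ (P (last z (tval t))) (@prob_kernel _ _ _ _ _ P _) 1
  (fun y => f (rcons (tval t) y)) (fun _ => B) (meas_frcons_p _ mf)
  (bdd_frcons _ (ex_intro _ B hB)) (measurable_cst _) (bdd_cst _ _).
rewrite Rint_cst; last exact: (@prob_kernel _ _ _ _ _ P).
rewrite mul1r (_ : (fun x => 1 * f (rcons (tval t) x) + B) = (fun x => f (rcons (tval t) x) + B)).
  by move=> E; apply: (addIr B); rewrite -E subrK.
by apply/funext => y; rewrite mul1r.
Qed.

End chain.
Section chain2.
Context (d : measure_display) (X : measurableType d) (R : realType).
Variable P : R.-pker X ~> X.
Local Notation z := (point : X).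
Local Notation TR := (@TR d X R P).
Implicit Types (f g F : seq X -> R) (a c C : R).

Lemma good_cst c : good (fun _ : seq X => c).
Proof. by split; [move=> m; exact: measurable_cst | exists `|c|]. Qed.

Lemma good_lin a f g : good f -> good g -> good (fun p : seq X => a * f p + g p).
Proof.
move=> [mf [B1 h1]] [mg [B2 h2]]; split.
  move=> m; apply: measurable_funD; last exact: mg.
  exact: (measurable_funM (measurable_cst a) (mf m)).
exists (`|a| * B1 + B2) => p; apply: le_trans (ler_normD _ _) _.
by rewrite normrM lerD // ler_wpM2l.
Qed.

Lemma TR_lin a f g p : good f -> good g ->
  TR (fun p => a * f p + g p) p = a * TR f p + TR g p.
Proof.
move=> [mf bf] [mg bg]; rewrite /TR.
by apply: Rint_lin; [exact: prob_kernel|exact: meas_frcons_p|exact: bdd_frcons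
  |exact: meas_frcons_p|exact: bdd_frcons].
Qed.

Lemma TR_cst c p : TR (fun _ => c) p = c.
Proof. by rewrite /TR Rint_cst //; exact: prob_kernel. Qed.

Lemma TR_le f g p : good f -> good g -> (forall q, f q <= g q) -> TR f p <= TR g p.
Proof.
move=> [mf bf] [mg bg] fg; rewrite /TR.
apply: Rint_le; [exact: prob_kernel|exact: meas_frcons_p|exact: bdd_frcons
  |exact: meas_frcons_p|exact: bdd_frcons|by move=> y; exact: fg].
Qed.

Lemma TR_bd f C p : good f -> (forall q, `|f q| <= C) -> `|TR f p| <= C.
Proof.
move=> gf hC; rewrite ler_norml; apply/andP; split.
  rewrite -[X in X <= _](TR_cst (- C) p); apply: TR_le => //; first exact: good_cst.
  by move=> q; have := hC q; rewrite ler_norml => /andP[].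
rewrite -[X in _ <= X](TR_cst C p); apply: TR_le => //; first exact: good_cst.
by move=> q; have := hC q; rewrite ler_norml => /andP[].
Qed.

Lemma good_TR f : good f -> good (TR f).
Proof.
move=> gf; split; first exact: goodm_TR.
by case: (gf) => _ [B hB]; exists B => p; exact: TR_bd.
Qed.

Definition iterTR k f := iter k TR f.

Lemma good_iter k f : good f -> good (iterTR k f).
Proof. by move=> gf; elim: k => //= k IH; exact: good_TR. Qed.

Lemma iter_lin k a f g p : good f -> good g ->
  iterTR k (fun p => a * f p + g p) p = a * iterTR k f p + iterTR k g p.
Proof.
move=> gf gg; elim: k p => // k IH p /=.
rewrite -/(iterTR k _) (_ : iterTR k _ = (fun p => a * iterTR k f p + iterTR k g p)).
  by apply: TR_lin; exact: good_iter.
by apply/funext => q; exact: IH.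
Qed.

Lemma iter_cst k c p : iterTR k (fun _ => c) p = c.
Proof.
elim: k p => // k IH p /=.
rewrite -/(iterTR k _) (_ : iterTR k _ = (fun _ => c)); first exact: TR_cst.
by apply/funext => q; exact: IH.
Qed.

Lemma iter_le k f g p : good f -> good g -> (forall q, f q <= g q) ->
  iterTR k f p <= iterTR k g p.
Proof.
move=> gf gg fg; elim: k p => [|k IH] p /=; first exact: fg.
by apply: TR_le => //; exact: good_iter.
Qed.

Lemma iter_bd k f C p : good f -> (forall q, `|f q| <= C) -> `|iterTR k f p| <= C.
Proof.
move=> gf hC; elim: k p => [|k IH] p /=; first exact: hC.
by apply: TR_bd => //; exact: good_iter.
Qed.

Lemma iter_local k f g p :
  (forall q, size q = (size p + k)%N -> f q = g q) -> iterTR k f p = iterTR k g p.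
Proof.
elim: k p => [|k IH] p hfg /=; first by apply: hfg; rewrite addn0.
rewrite /TR; congr Rintegral; apply/funext => y; apply: IH => q.
by rewrite size_rcons addSnnS; exact: hfg.
Qed.

Lemma last_nonempty (a b : X) q : q != [::] -> last a q = last b q.
Proof. by case: q. Qed.

Lemma iter_shift k f j :
  (forall p p' q, size p = j -> size p' = j -> f (p ++ q) = f (p' ++ q)) ->
  forall p p' q, size p = j -> size p' = j -> q != [::] ->
  iterTR k f (p ++ q) = iterTR k f (p' ++ q).
Proof.
move=> hf; elim: k => [|k IH] p p' q hp hp' hq /=; first exact: hf.
rewrite /TR !last_cat (last_nonempty _ (last z p') hq).
congr Rintegral; apply/funext => y; rewrite !rcons_cat; apply: IH => //.
by rewrite -cats1; case: q hq.
Qed.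

Lemma contE k (f : seq X -> R) (g : seq X -> \bar R) s x : good f ->
  (forall p, size p = (size s + k).+1 -> g p = (f p)%:E) ->
  cont P k g s x = (iterTR k f (rcons s x))%:E.
Proof.
move=> gf; elim: k s x => [|k IH] s x hg /=.
  by rewrite hg // size_rcons addn0.
rewrite -/(iterTR k f) /TR last_rcons RintE; last 3 first.
- exact: prob_kernel.
- by apply: meas_frcons_p; case: (good_iter k gf).
- by apply: bdd_frcons; case: (good_iter k gf).
apply: eq_integral => y _; apply: IH => p.
by rewrite size_rcons addSnnS => /hg.
Qed.

Lemma meas_single F : goodm F -> measurable_fun [set: X] (fun x => F [:: x]).
Proof.
move=> mF.
have mt : measurable_fun [set: X] (fun x : X => [tuple of [:: x]]).
  apply: meas_to_tuple => j; case: j => // _.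
  exact: measurable_id.
exact: (measurableT_comp (mF 1%N) mt).
Qed.

Definition Ex (xi : probability X R) k F := Rintegral xi [set: X] (fun x => iterTR k F [:: x]).

Lemma meas_Ex k F : good F -> measurable_fun [set: X] (fun x => iterTR k F [:: x]).
Proof. by move=> gF; apply: meas_single; case: (good_iter k gF). Qed.

Lemma bdd_Ex k F : good F -> bdd (fun x => iterTR k F [:: x]).
Proof. by move=> gF; case: (good_iter k gF) => _ [B hB]; exists B. Qed.

Lemma Ex_lin xi k a f g : good f -> good g ->
  Ex xi k (fun p => a * f p + g p) = a * Ex xi k f + Ex xi k g.
Proof.
move=> gf gg; rewrite /Ex -Rint_lin; last 5 first.
- exact: probability_setT.
- exact: meas_Ex.
- exact: bdd_Ex.
- exact: meas_Ex.
- exact: bdd_Ex.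
by congr Rintegral; apply/funext => x; exact: iter_lin.
Qed.

Lemma Ex_cst xi k c : Ex xi k (fun _ => c) = c.
Proof.
rewrite /Ex (_ : (fun x => _) = (fun _ => c)); last first.
  by apply/funext => x; exact: iter_cst.
by apply: Rint_cst; exact: probability_setT.
Qed.

Lemma Ex_le xi k f g : good f -> good g -> (forall q, f q <= g q) ->
  Ex xi k f <= Ex xi k g.
Proof.
move=> gf gg fg; apply: Rint_le; try exact: meas_Ex; try exact: bdd_Ex.
  exact: probability_setT.
by move=> x; exact: iter_le.
Qed.

Lemma chainE_Ex xi k f (g : seq X -> \bar R) : good f ->
  (forall p, size p = k.+1 -> g p = (f p)%:E) ->
  chainE P xi k g = (Ex xi k f)%:E.
Proof.
move=> gf hg; rewrite /chainE /Ex RintE; last 3 first.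
- exact: probability_setT.
- exact: meas_Ex.
- exact: bdd_Ex.
by apply: eq_integral => x _; rewrite (contE x gf).
Qed.

End chain2.
Section count.
Context (R : realFieldType).
Definition Scnt (N : nat) (u : R) : R := \sum_(j < N) ((j.+1)%:R < u)%R%:R.

Lemma Scnt_le_N N u : Scnt N u <= N%:R.
Proof.
rewrite /Scnt; elim: N => [|N IH]; first by rewrite big_ord0.
rewrite big_ord_recr /= -natr1 lerD //.
by case: (_ < _).
Qed.

Lemma Scnt_full N u : N%:R < u -> Scnt N u = N%:R.
Proof.
rewrite /Scnt; elim: N => [|N IH] hN; first by rewrite big_ord0.
rewrite big_ord_recr /= IH ?hN ?natr1 //.
by apply: le_lt_trans hN; rewrite ler_nat.
Qed.

Lemma Scnt_le N u : 0 <= u -> Scnt N u <= u.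
Proof.
rewrite /Scnt; elim: N => [|N IH] hu; first by rewrite big_ord0.
rewrite big_ord_recr /=; case: ltP => h.
  by have := Scnt_le_N N u; rewrite /Scnt -(lerD2r 1) natr1 => H; apply: le_trans H (ltW h).
by rewrite addr0 IH.
Qed.

Lemma Scnt_ge N u : u <= N%:R -> u - 1 <= Scnt N u.
Proof.
rewrite /Scnt; elim: N => [|N IH] hu.
  by rewrite big_ord0 lerBlDr add0r (le_trans hu) // ler01.
rewrite big_ord_recr /=; case: (lerP u N%:R) => h.
  apply: le_trans (IH h) _; rewrite lerDl; by case: (_ < _).
have := Scnt_full h; rewrite /Scnt => ->.
apply: le_trans (_ : N%:R <= _); first by rewrite lerBlDr natr1.
by rewrite lerDl; case: (_ < _).
Qed.
End count.
Section kl.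
Context (d : measure_display) (X : measurableType d) (R : realType).
Variable P : R.-pker X ~> X.
Local Notation z := (point : X).
Local Notation Ex := (@Ex d X R P).
Implicit Types (f g F : seq X -> R) (a c C : R).

Lemma good_last (G : X -> R) : measurable_fun [set: X] G -> bdd G ->
  good (fun p => G (last z p)).
Proof.
move=> mG [B hB]; split; last by exists B => p; exact: hB.
move=> m; exact: (measurableT_comp mG (@meas_last _ _ m)).
Qed.

Lemma good_indic (A : set X) : measurable A -> good (fun p => (\1_A (last z p) : R)).
Proof.
move=> mA; apply: good_last; first exact: measurable_indic.
by exists 1 => y; rewrite indicE; case: (_ \in _); rewrite ?normr1 ?normr0.
Qed.

Lemma lawX_Ex xi i (A : set X) : measurable A ->
  lawX P xi i A = (Ex xi i (fun p => \1_A (last z p)))%:E.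
Proof. by move=> mA; rewrite /lawX; apply: chainE_Ex => //; exact: good_indic. Qed.

Lemma Ex_sum xi k N (F : nat -> seq X -> R) (a : nat -> R) c :
  (forall j, good (F j)) ->
  good (fun p => c + \sum_(j < N) a j * F j p) /\
  Ex xi k (fun p => c + \sum_(j < N) a j * F j p) =
    c + \sum_(j < N) a j * Ex xi k (F j).
Proof.
move=> gF; elim: N => [|N [IH1 IH2]].
  rewrite (_ : (fun p => _) = (fun _ => c)); last first.
    by apply/funext => p; rewrite big_ord0 addr0.
  by rewrite big_ord0 addr0; split; [exact: good_cst | exact: Ex_cst].
have eqf : (fun p => c + \sum_(j < N.+1) a j * F j p) =
    (fun p => a N * F N p + (c + \sum_(j < N) a j * F j p)).
  by apply/funext => p; rewrite big_ord_recr /=; ring.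
rewrite eqf; split; first exact: good_lin.
rewrite Ex_lin // IH2 big_ord_recr /=; ring.
Qed.

Lemma KL_core xi xi' i (G : X -> R) C dd (N : nat) :
  measurable_fun [set: X] G -> (forall y, `|G y| <= C) -> 0 < C -> (0 < N)%N ->
  (forall A, measurable A ->
     `|Ex xi i (fun p => \1_A (last z p)) - Ex xi' i (fun p => \1_A (last z p))| <= dd) ->
  `|Ex xi i (fun p => G (last z p)) - Ex xi' i (fun p => G (last z p))|
    <= 2 * C * dd + 2 * C / N%:R.
Proof.
move=> mG hG C0 N0 hA.
set del := 2 * C / N%:R.
have N0' : (0 : R) < N%:R by rewrite ltr0n.
have del0 : 0 < del by rewrite /del divr_gt0 // mulr_gt0.
have Ndel : N%:R * del = 2 * C by rewrite /del mulrC divfK // gt_eqF.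
clearbody del.
pose Aj (j : nat) := [set y | - C + (j.+1)%:R * del < G y].
have mAj j : measurable (Aj j).
  have := mG measurableT _ (measurable_itv `](- C + (j.+1)%:R * del), +oo[).
  rewrite setTI; congr measurable; apply/seteqP; split => y /=;
    by rewrite in_itv /= andbT.
pose F (j : nat) p := (\1_(Aj j) (last z p) : R).
have gF j : good (F j) by exact: good_indic.
pose gst p := - C + \sum_(j < N) del * F j p.
have gG : good (fun p => G (last z p)).
  by apply: good_last => //; exists C.
have Egst xi0 : Ex xi0 i gst = - C + \sum_(j < N) del * Ex xi0 i (F j).
  exact: (@Ex_sum xi0 i N F (fun=> del) (- C) gF).2.
have ggst : good gst := (@Ex_sum xi i N F (fun=> del) (- C) gF).1.
have ptw p : gst p <= G (last z p) <= gst p + del.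
  set v := G (last z p); set u := (v + C) / del.
  have hv : - C <= v <= C by rewrite -ler_norml hG.
  have du : del * u = v + C by rewrite /u mulrC divfK // gt_eqF.
  have Fu j : F j p = (((j.+1)%:R < u)%R)%:R.
    rewrite /F indicE /u ltr_pdivlMr // -/v.
    have -> : (last z p \in Aj j) = ((j.+1)%:R * del < v + C) => //.
    apply/idP/idP => [/set_mem h|h].
      by rewrite /Aj /= addrC ltrBlDr in h.
    by apply/mem_set; rewrite /Aj /= addrC ltrBlDr.
  have gu : gst p = - C + del * Scnt N u.
    by rewrite /gst /Scnt mulr_sumr; congr (_ + _); apply: eq_bigr => j _; rewrite Fu.
  have u0 : 0 <= u by rewrite /u divr_ge0 ?(ltW del0) // -lerBlDr sub0r; case/andP: hv.
  have uN : u <= N%:R.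
    rewrite /u ler_pdivrMr // Ndel; case/andP: hv => _ h; lra.
  clearbody u v.
  have h1 := ler_wpM2l (ltW del0) (Scnt_le N u0).
  have h2 := ler_wpM2l (ltW del0) (Scnt_ge uN).
  rewrite mulrBr mulr1 in h2.
  rewrite gu; apply/andP; split; lra.
have lo xi0 : Ex xi0 i gst <= Ex xi0 i (fun p => G (last z p)).
  by apply: Ex_le => // p; case/andP: (ptw p).
have hi xi0 : Ex xi0 i (fun p => G (last z p)) <= Ex xi0 i gst + del.
  have := @Ex_le _ _ _ P xi0 i _ (fun p => 1 * gst p + del) gG (good_lin _ ggst (good_cst _ _)).
  rewrite Ex_lin // ?Ex_cst ?mul1r; last exact: good_cst.
  by apply => p; rewrite mul1r; case/andP: (ptw p).
have hsum : `|Ex xi i gst - Ex xi' i gst| <= 2 * C * dd.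
  rewrite /gst !Egst opprD addrACA subrr add0r -sumrB.
  apply: le_trans (ler_norm_sum _ _ _) _.
  apply: le_trans (_ : \sum_(j < N) del * dd <= _).
    apply: ler_sum => j _; rewrite -mulrBr normrM ger0_norm ?(ltW del0) //.
    exact: (ler_wpM2l (ltW del0) (hA _ (mAj j))).
  by rewrite sumr_const card_ord -[_ *+ N]mulr_natl mulrA Ndel.
have := lo xi; have := lo xi'; have := hi xi; have := hi xi'.
move: hsum; rewrite !ler_norml => /andP[s1 s2] h1 h2 h3 h4.
apply/andP; split; rewrite -/del; lra.
Qed.

End kl.
Section kl2.
Context (d : measure_display) (X : measurableType d) (R : realType).
Variable P : R.-pker X ~> X.
Local Notation z := (point : X).
Local Notation Ex := (@Ex d X R P).

Lemma KL xi xi' i (G : X -> R) C :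
  measurable_fun [set: X] G -> (forall y, `|G y| <= C) ->
  ((`|Ex xi i (fun p => G (last z p)) - Ex xi' i (fun p => G (last z p))|)%:E
    <= (2 * C)%:E * dTV (lawX P xi i) (lawX P xi' i))%E.
Proof.
move=> mG hG.
set D := dTV _ _.
have hA A : measurable A ->
    ((`|Ex xi i (fun p => \1_A (last z p)) - Ex xi' i (fun p => \1_A (last z p))|)%:E <= D)%E.
  move=> mA; apply: ereal_sup_ubound; exists A => //; rewrite !lawX_Ex //.
have D0 : (0 <= D)%E by apply: le_trans (hA set0 measurable0); rewrite lee_fin.
have C0 : 0 <= C := le_trans (normr_ge0 _) (hG z).
case: (eqVneq C 0) => [C00|Cn0].
  have G0 : (fun p => G (last z p)) = (fun _ => 0).
    by apply/funext => p; apply/eqP; rewrite -normr_le0 -C00.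
  by rewrite G0 !Ex_cst subrr normr0 C00 mulr0 mul0e.
have Cpos : 0 < C by rewrite lt0r Cn0 C0.
move: D0 hA; case: D => [dd| |] D0 hA //; last first.
  by rewrite gt0_muley ?lte_fin ?mulr_gt0 // leey.
rewrite -EFinM lee_fin; apply/ler_addgt0Pr => e e0.
pose N := (Num.Def.trunc (2 * C / e)).+1.
have hA' A : measurable A ->
    `|Ex xi i (fun p => \1_A (last z p)) - Ex xi' i (fun p => \1_A (last z p))| <= dd.
  by move=> mA; rewrite -lee_fin; exact: hA.
apply: le_trans (@KL_core _ _ _ P xi xi' i G C dd N mG hG Cpos (ltn0Sn _) hA') _.
have h := truncnS_gt (2 * C / e); rewrite ltr_pdivrMr // in h.
by rewrite lerD2l ler_pdivrMr ?ltr0n // [e * _]mulrC; apply: ltW.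
Qed.

End kl2.
Lemma dTV_ge0 d (X : measurableType d) (R : realType) (mu nu : set X -> \bar R) :
  (0 <= dTV mu nu)%E.
Proof.
apply: le_trans (_ : (`|mu set0 - nu set0| <= _)%E); first exact: abse_ge0.
by apply: ereal_sup_ubound; exists set0.
Qed.

Section main.
Context (d : measure_display) (X : measurableType d) (R : realType).
Variable P : R.-pker X ~> X.
Local Notation z := (point : X).
Local Notation Ex := (@Ex d X R P).
Local Notation iterTR := (@iterTR d X R P).
Variables (n : nat) (c : 'I_n -> R) (h : n.-tuple X -> R).
Hypothesis hc : forall i, 0 <= c i.
Hypothesis mh : measurable_fun [set: n.-tuple X] h.
Hypothesis hosc : forall x y : n.-tuple X,
     `| h x - h y | <= \sum_(i < n) c i * (tnth x i != tnth y i)%:R.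

Definition hyb (i : nat) (p : seq X) : R :=
  h [tuple (if (j < i)%N then z else nth z p j) | j < n].

Definition dlt i p := hyb i p - hyb i.+1 p.

Lemma h_bdd : exists B, forall t, `|h t| <= B.
Proof.
pose t0 := [tuple z | j < n].
exists (`|h t0| + \sum_(i < n) c i) => t.
have hs : \sum_(i < n) c i * (tnth t i != tnth t0 i)%:R <= \sum_(i < n) c i.
  by apply: ler_sum => i _; case: (_ != _); rewrite ?mulr1 ?mulr0.
have H := le_trans (hosc t t0) hs.
have := ler_normD (h t0) (h t - h t0); rewrite addrC subrK => H2.
by apply: le_trans H2 _; rewrite lerD2l.
Qed.

Lemma good_hyb i : good (hyb i).
Proof.
split; last by case: h_bdd => B hB; exists B => p; exact: hB.
move=> m; rewrite /hyb.
have mt : measurable_fun [set: m.-tuple X]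
    (fun t : m.-tuple X => [tuple (if (j < i)%N then z else nth z (tval t) j) | j < n]).
  apply/measurable_fun_tnthP => j.
  rewrite (_ : _ \o _ = (fun t : m.-tuple X => if (j < i)%N then z else nth z (tval t) j)).
    by case: (j < i)%N; [exact: measurable_cst | exact: meas_nth].
  by apply/funext => t /=; rewrite tnth_mktuple.
exact: (measurableT_comp mh mt).
Qed.

Lemma good_dlt i : good (dlt i).
Proof.
rewrite /dlt (_ : (fun p => _) = (fun p => (-1) * hyb i.+1 p + hyb i p)).
  by apply: good_lin; exact: good_hyb.
by apply/funext => p; rewrite mulN1r addrC.
Qed.

Lemma dlt_bd (i : 'I_n) p : `|dlt i p| <= c i.
Proof.
rewrite /dlt /hyb; apply: le_trans (hosc _ _) _.
rewrite (bigD1 i) //= big1 ?addr0; last first.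
  move=> j hj; rewrite !tnth_mktuple.
  have -> : (j < i.+1)%N = (j < i)%N.
    by rewrite ltnS leq_eqVlt (negbTE (_ : val j != val i)).
  by rewrite eqxx mulr0.
by case: (_ != _); rewrite ?mulr1 ?mulr0.
Qed.

Lemma dlt_shift i p p' q : size p = i -> size p' = i ->
  dlt i (p ++ q) = dlt i (p' ++ q).
Proof.
move=> hp hp'; rewrite /dlt /hyb.
congr (h _ - h _); apply: eq_mktuple => j;
  case: ifP => hj //; rewrite !nth_cat hp hp'.
- by rewrite ifF // hj.
- have hj' : (j < i)%N = false by apply/negbTE; move/negbT: hj; rewrite -leqNgt ltnNge => /negP/negP; rewrite -ltnNge => /ltnW; rewrite leqNgt.
  by rewrite hj'.
Qed.

Lemma tele xi k m : Ex xi k (hyb 0) = \sum_(i < m) Ex xi k (dlt i) + Ex xi k (hyb m).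
Proof.
elim: m => [|m IH]; first by rewrite big_ord0 add0r.
rewrite IH big_ord_recr /= -addrA; congr (_ + _).
rewrite -[Ex xi k (dlt m)]mul1r -Ex_lin; [|exact: good_dlt|exact: good_hyb].
by congr Ex; apply/funext => p; rewrite /dlt mul1r subrK.
Qed.

Lemma hyb_n : hyb n = (fun _ => h [tuple z | j < n]).
Proof.
apply/funext => p; rewrite /hyb; congr h; apply: eq_mktuple => j.
by rewrite ltn_ord.
Qed.

Definition Gi (i : nat) (y : X) := iterTR (n.-1 - i) (dlt i) (nseq i z ++ [:: y]).

Lemma meas_Gi i : measurable_fun [set: X] (Gi i).
Proof.
have [mF _] := good_iter P (n.-1 - i) (good_dlt i).
have mt : measurable_fun [set: X] (fun y : X => [tuple of nseq i z ++ [:: y]]).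
  apply: meas_to_tuple => j hj /=.
  case: (ltnP j i) => hji.
    rewrite (_ : (fun x => _) = cst z); first exact: measurable_cst.
    by apply/funext => y; rewrite nth_cat size_nseq hji nth_nseq hji.
  have -> : j = i by lia.
  rewrite (_ : (fun x => _) = id); first exact: measurable_id.
  by apply/funext => y; rewrite nth_cat size_nseq ltnn subnn.
exact: (measurableT_comp (mF (i + 1)%N) mt).
Qed.

Lemma Gi_bd (i : 'I_n) y : `|Gi i y| <= c i.
Proof. by apply: iter_bd; [exact: good_dlt | move=> q; exact: dlt_bd]. Qed.

Lemma Ex_dlt xi (i : 'I_n) :
  Ex xi n.-1 (dlt i) = Ex xi i (fun p => Gi i (last z p)).
Proof.
have hi : (i <= n.-1)%N.
  by rewrite -ltnS prednK ?ltn_ord // (leq_ltn_trans (leq0n i) (ltn_ord i)).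
rewrite /Ex; congr Rintegral; apply/funext => x.
rewrite -{1}(subnKC hi) /iterTR iterD.
apply: iter_local => q; rewrite /= add1n => hq.
have hsz : size (drop i q) = 1%N by rewrite size_drop hq subSnn.
case E: (drop i q) hsz => [|a [|b r]] // _.
have Hq : q = take i q ++ [:: a] by rewrite -E cat_take_drop.
rewrite /Gi Hq last_cat /=.
apply: (@iter_shift _ _ _ P _ _ i) => //.
- by move=> p1 p2 q1; exact: dlt_shift.
- by rewrite size_take hq ltnSn.
- by rewrite size_nseq.
Qed.

Lemma main_bound xi xi' :
  ((`|Ex xi n.-1 (hyb 0) - Ex xi' n.-1 (hyb 0)|)%:E <=
   2%:E * \sum_(i < n) ((c i)%:E * dTV (lawX P xi i) (lawX P xi' i)))%E.
Proof.
rewrite (tele xi n.-1 n) (tele xi' n.-1 n) hyb_n !Ex_cst.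
rewrite opprD addrACA subrr addr0 -sumrB.
apply: le_trans (_ : ((\sum_(i < n) `|Ex xi n.-1 (dlt i) - Ex xi' n.-1 (dlt i)|)%:E <= _))%E.
  by rewrite lee_fin; exact: ler_norm_sum.
rewrite -sumEFin ge0_sume_distrr; last first.
  by move=> i _; apply: mule_ge0; [rewrite lee_fin | exact: dTV_ge0].
apply: lee_sum => i _; rewrite muleA -EFinM !Ex_dlt.
apply: KL; first exact: meas_Gi.
by move=> y; exact: Gi_bd.
Qed.

End main.

Lemma chainE_tuple_Ex d (X : measurableType d) (R : realType) (P : R.-pker X ~> X)
  (xi : probability X R) (n : nat) (hn : (0 < n)%N) (c : 'I_n -> R)
  (hc : forall i, 0 <= c i)
  (h : n.-tuple X -> R) (mh : measurable_fun [set: n.-tuple X] h)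
  (hosc : forall x y : n.-tuple X,
     `| h x - h y | <= \sum_(i < n) c i * (tnth x i != tnth y i)%:R) :
  chainE_tuple P xi h = (Ex P xi n.-1 (hyb h 0))%:E.
Proof.
rewrite /chainE_tuple; apply: chainE_Ex; first exact: (good_hyb hc mh hosc).
move=> p; rewrite prednK // => hp; congr EFin; rewrite /hyb; congr h.
apply: eq_from_tnth => j; rewrite tnth_mktuple /= (tnth_nth point) insubdK //.
by rewrite unfold_in /= hp.
Qed.

Unset Implicit Arguments. Set Strict Implicit.

Theorem lemma1 (d : measure_display) (X : measurableType d) (R : realType)
  (P : R.-pker X ~> X) (xi xi' : probability X R) (n : nat) (hn : (0 < n)%N)
  (c : 'I_n -> R) (hc : forall i, 0 <= c i)
  (h : n.-tuple X -> R) (mh : measurable_fun [set: n.-tuple X] h)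
  (hosc : forall x y : n.-tuple X,
     `| h x - h y | <= \sum_(i < n) c i * (tnth x i != tnth y i)%:R) :
  (`| chainE_tuple P xi h - chainE_tuple P xi' h |
    <= 2%:E * \sum_(i < n) ((c i)%:E * dTV (lawX P xi i) (lawX P xi' i)))%E.
Proof.
rewrite (chainE_tuple_Ex P xi hn hc mh hosc) (chainE_tuple_Ex P xi' hn hc mh hosc) -EFinB /=.
exact: (main_bound P hc mh hosc).
Qed.
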